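(* Fix $\phi\in\mathbb{R}^d$ with $\mu=\|\phi\|^2>0$, a one-hot label ${\bm y}\in\{0,1\}^V$, and let $f({\bm z},{\bm y})=-\sum_k y_k\log p_k({\bm z})$ with ${\bm p}({\bm z})=\mathrm{softmax}({\bm z})$. Let $\kappa\ge0$, $|\eta|\in(0,1]$, $|\rho|\le\kappa\sqrt{|\eta|}$. Given ${\bm W}^t\in\mathbb{R}^{V\times d}$, let ${\bm z}^t={\bm W}^t\phi$, ${\bm p}^t={\bm p}({\bm z}^t)$, ${\bm g}^t={\bm p}^t-{\bm y}$, ${\bm H}^t_{{\bm z}}=\mathrm{diag}({\bm p}^t)-{\bm p}^t({\bm p}^t)^\top$, and let ${\bm W}^{t+1}$ be obtained by one SAM step: with $F({\bm W})=f({\bm W}\phi,{\bm y})$, $\widetilde{{\bm W}}^t={\bm W}^t+\rho\nabla F({\bm W}^t)/\|\nabla F({\bm W}^t)\|$ (perturbation $0$ if ${\bm g}^t=0$) and ${\bm W}^{t+1}={\bm W}^t-\eta\nabla F(\widetilde{{\bm W}}^t)$; let ${\bm g}^{t+1}={\bm p}({\bm W}^{t+1}\phi)-{\bm y}$, and $\tilde\rho^{\,t}=\rho\sqrt\mu/\|{\bm g}^t\|$ (with $\tilde\rho^{\,t}=0$ if ${\bm g}^t=0$). Let ${\bm H}^t_{{\bm z}}=\sum_{k=1}^{V-1}\lambda_k^t{\bm v}_k^t({\bm v}_k^t)^\top$ be a spectral decomposition with $\lambda_k^t>0$ and $({\bm v}_k^t)^\top{\bm v}_\ell^t=\delta_{k\ell}$,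 and define $e_k^t=({\bm v}_k^t)^\top{\bm g}^t$ for $k=1,\dots,V-1$. Then there exists a constant $C>0$ (depending only on $V,\mu,\kappa$) such that for all $k=1,\dots,V-1$, $$({\bm v}_k^t)^\top{\bm g}^{t+1}=\Big(1-\eta\mu\big[\lambda_k^t+\tilde\rho^{\,t}(\lambda_k^t)^2\big]\Big)e_k^t+r_k^t,\qquad |r_k^t|\le C\eta^2.$$
   Context: $\|\cdot\|$ is the Euclidean norm on vectors and Frobenius norm on matrices. The gradient in ${\bm W}$ is $\nabla F({\bm W})=(\nabla_{\bm z} f({\bm W}\phi,{\bm y}))\phi^\top$. *)

(* Defs.v *)
From HB Require Import structures.
From mathcomp Require Import all_boot all_order all_algebra.
From mathcomp Require Import all_classical all_reals all_analysis.
Set Implicit Arguments. Unset Strict Implicit. Unset Printing Implicit Defensive.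
Import Order.TTheory GRing.Theory Num.Theory.
Local Open Scope ring_scope.

Section SAM.
Variable R : realType.

Definition vnorm (n : nat) (x : 'cV[R]_n) : R :=
  Num.sqrt (\sum_(i < n) x i ord0 ^+ 2).

Definition frob (m n : nat) (A : 'M[R]_(m, n)) : R :=
  Num.sqrt (\sum_(i < m) \sum_(j < n) A i j ^+ 2).

Definition softmax (V : nat) (z : 'cV[R]_V) : 'cV[R]_V :=
  \col_(k < V) (expR (z k ord0) / \sum_(j < V) expR (z j ord0)).

Definition xent (V : nat) (z y : 'cV[R]_V) : R :=
  - \sum_(k < V) y k ord0 * ln (softmax z k ord0).

Definition onehot (V : nat) (y : 'cV[R]_V) : Prop :=
  exists c : 'I_V, y = delta_mx c ord0.

Definition grad_z (V : nat) (y z : 'cV[R]_V) : 'cV[R]_V :=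
  \col_(k < V) derive1 (fun s : R => xent (z + s *: delta_mx k ord0) y) 0.

(* F(W) = f(W phi, y); its gradient  (grad_z f(W phi, y)) phi^T *)
Definition gradF (V d : nat) (phi : 'cV[R]_d) (y : 'cV[R]_V)
  (W : 'M[R]_(V, d)) : 'M[R]_(V, d) :=
  grad_z y (W *m phi) *m phi^T.

Definition gvec (V d : nat) (phi : 'cV[R]_d) (y : 'cV[R]_V)
  (W : 'M[R]_(V, d)) : 'cV[R]_V :=
  softmax (W *m phi) - y.

Definition sam_step (V d : nat) (phi : 'cV[R]_d) (y : 'cV[R]_V)
  (eta rho : R) (W : 'M[R]_(V, d)) : 'M[R]_(V, d) :=
  let Wt := W + (if gvec phi y W == 0 then 0
                 else (rho / frob (gradF phi y W)) *: gradF phi y W) in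
  W - eta *: gradF phi y Wt.

Definition Hz (V : nat) (z : 'cV[R]_V) : 'M[R]_V :=
  diag_mx (softmax z)^T - softmax z *m (softmax z)^T.

End SAM.

(* Main.v *)
Require Import Defs.
From HB Require Import structures.
From mathcomp Require Import all_boot all_order all_algebra.
From mathcomp Require Import all_classical all_reals all_analysis.
From mathcomp Require Import ring lra.
Import Order.TTheory GRing.Theory Num.Theory.
Local Open Scope ring_scope.
Set Implicit Arguments. Unset Strict Implicit. Unset Printing Implicit Defensive.

Section S.
Variable R : realType.

Lemma sum_exp_gt0 V (z : 'cV[R]_V) (k : 'I_V) : 0 < \sum_(j < V) expR (z j ord0).
Proof.
rewrite (bigD1 k) //=; apply: ltr_pwDl; first exact: expR_gt0.
by apply: sumr_ge0 => j _; exact: expR_ge0.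
Qed.

Lemma grad_onehot V (z : 'cV[R]_V) (c : 'I_V) :
  grad_z (delta_mx c ord0) z = softmax z - delta_mx c ord0.
Proof.
apply/matrixP => k j; rewrite (ord1 j) !mxE /=.
set T := \sum_(j < V) expR (z j ord0).
set b := expR (z k ord0).
set dl : R := (c == k)%:R.
have Tp : 0 < T by exact: sum_exp_gt0 k.
have Hf : (fun s : R => xent (z + s *: delta_mx k ord0) (delta_mx c ord0))
   = (fun s => - (z c ord0 + dl * s) + ln ((T - b) + b * expR s)).
  apply/funext => s; rewrite /xent.
  rewrite (bigD1 c) //= big1 ?addr0; last first.
    by move=> i /negPf ic; rewrite mxE ic /= mul0r.
  rewrite !mxE eqxx /= mul1r.
  have -> : \sum_(j < V) expR ((z + s *: delta_mx k ord0) j ord0)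
      = T - b + b * expR s.
    rewrite /T (bigD1 k) //= [in RHS](bigD1 k) //=.
    rewrite !mxE eqxx /= mulr1 expRD.
    rewrite (eq_bigr (fun j => expR (z j ord0))); last first.
      by move=> i /negPf ik; rewrite !mxE ik /= mulr0 addr0.
    by rewrite /b; ring.
  rewrite ln_div; last 2 first.
  - by rewrite posrE expR_gt0.
  - rewrite posrE; apply: ltr_wpDl; last by rewrite mulr_gt0 // expR_gt0.
    rewrite subr_ge0 /T /b (bigD1 k) //= lerDl.
    by apply: sumr_ge0 => i _; exact: expR_ge0.
  rewrite expRK eqxx andbT /dl; ring.
rewrite Hf.
have D : is_derive (0:R) 1 (fun s => - (z c ord0 + dl * s) + ln ((T - b) + b * expR s))
           (- dl + T^-1 * b).
  have I1 : is_derive (0:R) 1 (fun s : R => T - b + b * expR s) b.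
    have := @is_deriveD R R R (cst (T - b)) (fun s => b * expR s) 0 1 0 b.
    rewrite add0r; apply.
    have := @is_deriveZ R R R (fun s => expR s) b 0 1 1.
    move=> h; have E : is_derive (0:R) 1 expR 1.
      by have := is_derive_expR (0:R); rewrite expR0.
    have h2 := h E. rewrite -[X in is_derive _ _ _ X](mulr1 b). exact: h2.
  have I2 : is_derive (0:R) 1 (@ln R \o (fun s : R => T - b + b * expR s)) (T^-1 * b).
    apply: is_derive1_comp => //.
    by rewrite expR0 mulr1 subrK; apply: is_derive1_ln.
  have I3 : is_derive (0:R) 1 (fun s : R => - (z c ord0 + dl * s)) (- dl).
    apply: is_deriveN.
    have := @is_deriveD R R R (cst (z c ord0)) (fun s => dl * s) 0 1 0 dl.
    rewrite add0r; apply.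
    have := @is_deriveZ R R R id dl 0 1 1.
    move=> h; have E : is_derive (0:R) 1 id 1 by exact: is_derive_id.
    have h2 := h E. rewrite -[X in is_derive _ _ _ X](mulr1 dl). exact: h2.
  exact: (@is_deriveD R R R _ (@ln R \o (fun s : R => T - b + b * expR s)) 0 1 _ _ I3 I2).
rewrite derive1E derive_val eqxx andbT /dl eq_sym; rewrite mulrC; ring.
Qed.

Lemma exp_rem (x : R) : `|expR x - 1 - x| <= expR `|x| * x ^+ 2.
Proof.
have h0 : 0 <= expR x - 1 - x by have := expR_ge1Dx x; lra.
rewrite ger0_norm //.
have e1 : 1 <= expR `|x| by rewrite -expR0 ler_expR.
have [xm|xm] := lerP (-1) x.
- have h1 : (1 + x) * (1 - x) <= (1 + x) * expR (- x).
    by apply: ler_wpM2l; [lra | have := expR_ge1Dx (- x); lra].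
  have h2 : expR x * expR (- x) = 1 by rewrite -expRD subrr expR0.
  have h3 : expR x <= expR `|x| by rewrite ler_expR ler_norm.
  have h4 : expR x * x ^+ 2 <= expR `|x| * x ^+ 2 by apply: ler_wpM2r => //; exact: sqr_ge0.
  apply: le_trans h4.
  have ex0 := expR_gt0 x.
  have h5 : expR x * ((1 + x) * (1 - x)) <= expR x * ((1 + x) * expR (- x)).
    by apply: ler_wpM2l => //; exact: ltW.
  have h6 : expR x * ((1 + x) * expR (- x)) = 1 + x.
    by rewrite mulrCA h2 mulr1.
  have h7 : expR x * ((1 + x) * (1 - x)) = expR x - expR x * x ^+ 2 by ring.
  lra.
- have h1 : expR x <= 1 by rewrite -expR0 ler_expR; lra.
  have h2 : - x <= x ^+ 2 by nra.
  have h3 : x ^+ 2 <= expR `|x| * x ^+ 2.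
    by rewrite -{1}(mul1r (x ^+ 2)); apply: ler_wpM2r => //; exact: sqr_ge0.
  lra.
Qed.

Lemma sm_gt0 V (z : 'cV[R]_V) i : 0 < softmax z i ord0.
Proof. by rewrite mxE divr_gt0 ?expR_gt0 // (sum_exp_gt0 z i). Qed.

Lemma sm_sum1 V (z : 'cV[R]_V) (i0 : 'I_V) : \sum_(j < V) softmax z j ord0 = 1.
Proof.
under eq_bigr => j _ do rewrite mxE.
by rewrite -mulr_suml divff // gt_eqF // (sum_exp_gt0 z i0).
Qed.

Lemma sm_le1 V (z : 'cV[R]_V) i : softmax z i ord0 <= 1.
Proof.
rewrite -(sm_sum1 z i) (bigD1 i) //= lerDl.
by apply: sumr_ge0 => j _; exact: ltW (sm_gt0 z j).
Qed.

Lemma sm_shift V (z dl : 'cV[R]_V) i :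
  softmax (z + dl) i ord0 = softmax z i ord0 * expR (dl i ord0) /
     \sum_(j < V) softmax z j ord0 * expR (dl j ord0).
Proof.
have Tp := sum_exp_gt0 z i.
rewrite !mxE.
under eq_bigr => j _ do rewrite !mxE expRD.
under [X in _ = _ / X]eq_bigr => j _ do rewrite mxE mulrAC.
rewrite -mulr_suml.
have Sp : 0 < \sum_(j < V) expR (z j ord0) * expR (dl j ord0).
  rewrite (bigD1 i) //=; apply: ltr_pwDl; first by rewrite mulr_gt0 ?expR_gt0.
  by apply: sumr_ge0 => j _; rewrite mulr_ge0 ?expR_ge0.
rewrite expRD; field; rewrite !gt_eqF //; exact: expR_gt0.
Qed.

Lemma Hz_mul V (z x : 'cV[R]_V) i :
  (Hz z *m x) i ord0 = softmax z i ord0 * x i ord0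
     - softmax z i ord0 * \sum_(j < V) softmax z j ord0 * x j ord0.
Proof.
rewrite /Hz mulmxBl mul_diag_mx -mulmxA !mxE big_ord1 !mxE.
congr (_ - _ * _); apply: eq_bigr => j _; rewrite !mxE //.
Qed.

Definition KB (B : R) := expR B * (expR B + 2 + expR B * (1 + 2 * B)).

Lemma KB_ge0 B : 0 <= B -> 0 <= KB B.
Proof.
move=> B0; rewrite /KB mulr_ge0 ?expR_ge0 // addr_ge0 ?mulr_ge0 ?expR_ge0 //;
  try lra.
Qed.

Lemma rem_bound V (z dl : 'cV[R]_V) (D B : R) i :
  0 <= D -> D <= B -> (forall j, `|dl j ord0| <= D) ->
  `|softmax (z + dl) i ord0 - softmax z i ord0 - (Hz z *m dl) i ord0| <= KB B * D ^+ 2.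
Proof.
move=> D0 DB hD.
rewrite sm_shift Hz_mul.
set p := fun j => softmax z j ord0.
have p0 j : 0 < p j by exact: sm_gt0.
have p1 j : p j <= 1 by exact: sm_le1.
have ps : \sum_(j < V) p j = 1 by exact: sm_sum1 z i.
set S := \sum_(j < V) p j * expR (dl j ord0).
set m := \sum_(j < V) p j * dl j ord0.
set a := dl i ord0.
set E := expR B.
have E0 : 0 < E by exact: expR_gt0.
have Sge : expR (- B) <= S.
  rewrite -[expR (- B)]mul1r -ps mulr_suml; apply: ler_sum => j _.
  apply: ler_wpM2l; first exact: ltW.
  rewrite ler_expR; have := hD j; rewrite ler_norml; lra.
have Sp : 0 < S by apply: lt_le_trans Sge; exact: expR_gt0.
have Sinv : S^-1 <= E.
  rewrite /E -[B]opprK expRN; rewrite lef_pV2 ?posrE ?expR_gt0 //.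
have ra := exp_rem a.
have Ebound x : `|x| <= D -> `|expR x - 1 - x| <= E * D ^+ 2.
  move=> hx; apply: le_trans (exp_rem x) _.
  apply: ler_pM; rewrite ?expR_ge0 ?sqr_ge0 //.
    by rewrite ler_expR; apply: le_trans hx DB.
  by rewrite -real_normK ?num_real // ler_sqr ?nnegrE ?normr_ge0.
set rS := S - 1 - m.
have rSe : rS = \sum_(j < V) p j * (expR (dl j ord0) - 1 - dl j ord0).
  rewrite /rS /S /m.
  have -> : \sum_(j < V) p j * (expR (dl j ord0) - 1 - dl j ord0) =
    \sum_(j < V) p j * expR (dl j ord0) - \sum_(j < V) p j - \sum_(j < V) p j * dl j ord0.
    by rewrite -!sumrB; apply: eq_bigr => j _; ring.
  by rewrite ps.
have rSb : `|rS| <= E * D ^+ 2.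
  rewrite rSe; apply: le_trans (ler_norm_sum _ _ _) _.
  apply: le_trans (_ : _ <= \sum_(j < V) p j * (E * D ^+ 2)) _; last first.
    by rewrite -mulr_suml ps mul1r.
  apply: ler_sum => j _.
  rewrite normrM ger0_norm; last exact: ltW.
  by apply: ler_wpM2l; [exact: ltW | exact: Ebound].
have mb : `|m| <= D.
  apply: le_trans (ler_norm_sum _ _ _) _.
  apply: le_trans (_ : _ <= \sum_(j < V) p j * D) _; last first.
    by rewrite -mulr_suml ps mul1r.
  apply: ler_sum => j _.
  rewrite normrM ger0_norm; last exact: ltW.
  by apply: ler_wpM2l; [exact: ltW | exact: hD].
have ab : `|a| <= D by exact: hD.
have rab : `|expR a - 1 - a| <= E * D ^+ 2 by exact: Ebound.
set ra' := expR a - 1 - a in rab.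
set N := ra' - m * a + m ^+ 2 - rS * (1 + a - m).
have key : p i * expR a / S - p i - (p i * a - p i * m) = p i * N / S.
  rewrite /N /ra' /rS; field; by rewrite gt_eqF.
rewrite key.
have Nb : `|N| <= D ^+ 2 * (E + 2 + E * (1 + 2 * B)).
  rewrite /N; set t := rS * (1 + a - m).
  have tb : `|t| <= E * D ^+ 2 * (1 + 2 * B).
    rewrite /t normrM; apply: ler_pM; rewrite ?normr_ge0 //.
    apply: le_trans (ler_normD _ _) _.
    apply: le_trans (lerD (ler_normD _ _) (lexx _)) _.
    rewrite normrN normr1; lra.
  have mab : `|m * a| <= D ^+ 2 by rewrite normrM expr2; apply: ler_pM.
  have m2 : `|m ^+ 2| <= D ^+ 2.
    by rewrite normrX; apply: lerXn2r; rewrite ?nnegrE ?normr_ge0.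
  have := ler_normD (ra' - m * a + m ^+ 2) (- t).
  have := ler_normD (ra' - m * a) (m ^+ 2).
  have := ler_normD ra' (- (m * a)).
  rewrite !normrN => h1 h2 h3.
  have : `|ra' - m * a + m ^+ 2 - t| <= E * D ^+ 2 + D ^+ 2 + D ^+ 2 + E * D ^+ 2 * (1 + 2 * B).
    lra.
  move=> h; apply: le_trans h _; rewrite le_eqVlt; apply/orP; left; apply/eqP; ring. 
rewrite /KB normrM normrV ?unitfE ?gt_eqF // normrM (gtr0_norm Sp) (gtr0_norm (p0 i)).
have : `|N| * S^-1 <= D ^+ 2 * (E + 2 + E * (1 + 2 * B)) * E.
  apply: ler_pM; rewrite ?normr_ge0 ?invr_ge0 //; exact: ltW.
move=> h; rewrite -mulrA; apply: le_trans (ler_wpM2r _ (p1 i)) _.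
  by rewrite mulr_ge0 ?normr_ge0 ?invr_ge0 // ltW.
rewrite mul1r; apply: le_trans h _. rewrite /E le_eqVlt; apply/orP; left; apply/eqP; ring.
Qed.

Lemma dotE V (u w : 'cV[R]_V) : (u^T *m w) ord0 ord0 = \sum_(i < V) u i ord0 * w i ord0.
Proof. by rewrite mxE; apply: eq_bigr => i _; rewrite mxE. Qed.

Lemma dot_bound V (u w : 'cV[R]_V) (M : R) :
  (forall i, `|u i ord0| <= 1) -> (forall i, `|w i ord0| <= M) ->
  `|(u^T *m w) ord0 ord0| <= V%:R * M.
Proof.
move=> hu hw; rewrite dotE; apply: le_trans (ler_norm_sum _ _ _) _.
apply: le_trans (_ : _ <= \sum_(i < V) M) _; last by rewrite sumr_const card_ord mulr_natl.
apply: ler_sum => i _; rewrite normrM -[M]mul1r; apply: ler_pM; rewrite ?normr_ge0 //.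
Qed.

Lemma unit_entry V (u : 'cV[R]_V) i : u^T *m u = 1%:M -> `|u i ord0| <= 1.
Proof.
move=> h; have := congr1 (fun A : 'M[R]_1 => A ord0 ord0) h; rewrite /= dotE mxE eqxx /= => hs.
have : u i ord0 ^+ 2 <= 1.
  apply: le_trans (_ : _ <= \sum_(i < V) u i ord0 * u i ord0) _; last by rewrite hs.
  rewrite (bigD1 i) //= expr2 lerDl; apply: sumr_ge0 => j _; rewrite -expr2; exact: sqr_ge0.
by move=> h2; rewrite -(expr_le1 (n:=2)) // real_normK ?num_real.
Qed.

Lemma Hz_bound V (z x : 'cV[R]_V) (M : R) i :
  (forall j, `|x j ord0| <= M) -> `|(Hz z *m x) i ord0| <= 2 * M.
Proof.
move=> hx; rewrite Hz_mul.
have p0 j : 0 < softmax z j ord0 := sm_gt0 z j.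
have p1 j : softmax z j ord0 <= 1 := sm_le1 z j.
have ps := sm_sum1 z i.
have M0 : 0 <= M by apply: le_trans (hx i); exact: normr_ge0.
have m : `|\sum_(j < V) softmax z j ord0 * x j ord0| <= M.
  apply: le_trans (ler_norm_sum _ _ _) _.
  apply: le_trans (_ : _ <= \sum_(j < V) softmax z j ord0 * M) _; last first.
    by rewrite -mulr_suml ps mul1r.
  apply: ler_sum => j _; rewrite normrM ger0_norm; last exact: ltW.
  by apply: ler_wpM2l; [exact: ltW | exact: hx].
apply: le_trans (ler_normB _ _) _; rewrite !normrM ger0_norm; last exact: ltW.
have h1 : softmax z i ord0 * `|x i ord0| <= M.
  by rewrite -[M]mul1r; apply: ler_pM; rewrite ?normr_ge0 // ltW.
have h2 : softmax z i ord0 * `|\sum_(j < V) softmax z j ord0 * x j ord0| <= M.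
  by rewrite -[M]mul1r; apply: ler_pM; rewrite ?normr_ge0 // ltW.
lra.
Qed.

Lemma g_bound V (z : 'cV[R]_V) (c : 'I_V) i :
  `|(softmax z - delta_mx c ord0) i ord0| <= 1.
Proof.
have p0 := sm_gt0 z i; have p1 := sm_le1 z i.
rewrite [X in `|X|]mxE.
move: p0 p1; set p := softmax z i ord0 => p0 p1.
rewrite !mxE eqxx andbT; case: (i == c) => /=; rewrite ler_norml; lra.
Qed.

Lemma vnorm_entry V (x : 'cV[R]_V) i : `|x i ord0| <= vnorm x.
Proof.
rewrite /vnorm -sqrtr_sqr; apply: ler_wsqrtr.
rewrite (bigD1 i) //= lerDl; apply: sumr_ge0 => j _; exact: sqr_ge0.
Qed.

Lemma vnorm_ge0 V (x : 'cV[R]_V) : 0 <= vnorm x.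
Proof. exact: sqrtr_ge0. Qed.

Lemma vnorm_sq V (x : 'cV[R]_V) : vnorm x ^+ 2 = \sum_(i < V) x i ord0 ^+ 2.
Proof. by rewrite /vnorm sqr_sqrtr // sumr_ge0 // => i _; exact: sqr_ge0. Qed.

Lemma vnorm_gt0 V (x : 'cV[R]_V) : x != 0 -> 0 < vnorm x.
Proof.
move=> x0; rewrite lt_neqAle vnorm_ge0 andbT; apply/eqP => h.
move/eqP: x0; apply; apply/matrixP => i j; rewrite (ord1 j) mxE.
have := vnorm_entry x i; rewrite -h normr_le0 => /eqP //.
Qed.

Lemma frob_outer V d (g : 'cV[R]_V) (phi : 'cV[R]_d) :
  frob (g *m phi^T) = vnorm g * vnorm phi.
Proof.
rewrite /frob /vnorm -sqrtrM; last by apply: sumr_ge0 => i _; exact: sqr_ge0.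
congr Num.sqrt; rewrite mulr_suml; apply: eq_bigr => i _.
rewrite mulr_sumr; apply: eq_bigr => j _; rewrite !mxE big_ord1 !mxE exprMn //.
Qed.

Lemma phiTphi d (phi : 'cV[R]_d) : phi^T *m phi = (vnorm phi ^+ 2)%:M.
Proof.
apply/matrixP => i j; rewrite (ord1 i) (ord1 j) dotE vnorm_sq !mxE eqxx /= mulr1n.
by apply: eq_bigr => l _; rewrite expr2.
Qed.

Lemma entD m n (A B : 'M[R]_(m, n)) i j : (A + B) i j = A i j + B i j.
Proof. by rewrite mxE. Qed.
Lemma entN m n (A : 'M[R]_(m, n)) i j : (- A) i j = - A i j.
Proof. by rewrite mxE. Qed.
Lemma entB m n (A B : 'M[R]_(m, n)) i j : (A - B) i j = A i j - B i j.
Proof. by rewrite entD entN. Qed.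
Lemma entZ m n a (A : 'M[R]_(m, n)) i j : (a *: A) i j = a * A i j.
Proof. by rewrite mxE. Qed.
Lemma decomp (M : zmodType) (a b h y : M) : a - y = b - y + h + (a - b - h).
Proof.
by rewrite addrACA subrr addr0 addrC addrA subrK.
Qed.
End S.

Unset Implicit Arguments.
Set Strict Implicit.

Theorem corollary1 (R : realType) (V : nat) (mu kappa : R) :
  0 < mu -> 0 <= kappa ->
  exists C : R, 0 < C /\
  forall (d : nat) (phi : 'cV[R]_d), vnorm phi ^+ 2 = mu ->
  forall (y : 'cV[R]_V), onehot y ->
  forall eta rho : R, 0 < `|eta| -> `|eta| <= 1 ->
  `|rho| <= kappa * Num.sqrt `|eta| ->
  forall (W : 'M[R]_(V, d)) (lam : 'I_V.-1 -> R) (v : 'I_V.-1 -> 'cV[R]_V),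
  Hz (W *m phi) = \sum_(k < V.-1) lam k *: (v k *m (v k)^T) ->
  (forall k, 0 < lam k) ->
  (forall k l, (v k)^T *m v l = (k == l)%:R%:M) ->
  let g := gvec phi y W in
  let g1 := gvec phi y (sam_step phi y eta rho W) in
  let rhot := if g == 0 then 0 else rho * Num.sqrt mu / vnorm g in
  forall k : 'I_V.-1,
    let e := ((v k)^T *m g) ord0 ord0 in
    let r := ((v k)^T *m g1) ord0 ord0
             - (1 - eta * mu * (lam k + rhot * lam k ^+ 2)) * e in
    `|r| <= C * eta ^+ 2.
Proof.
move=> mu0 ka0.
have mu0' : 0 <= mu := ltW mu0.
set B := mu + kappa * Num.sqrt mu.
have B0 : 0 <= B by rewrite addr_ge0 ?mulr_ge0 ?sqrtr_ge0 // ltW.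
set K := KB B.
have K0 : 0 <= K by exact: KB_ge0.
have KBK : KB B = K by [].
clearbody K.
set n : R := V%:R.
have n0 : 0 <= n by exact: ler0n.
set C1 := 2 * n * n * K * kappa ^+ 2 * mu ^+ 2.
set C2 := n * K * mu ^+ 2.
have C10 : 0 <= C1 by rewrite /C1 !mulr_ge0 ?sqr_ge0 ?ler0n.
have C20 : 0 <= C2 by rewrite /C2 !mulr_ge0 ?sqr_ge0 ?ler0n.
exists (C1 + C2 + 1); split; first lra.
move=> d phi hphi y [c hy] eta rho e0 e1 hrho W lam v hH lam0 vo. subst y. move=> g g1 rhot k; cbv zeta.
set e := ((v k)^T *m g) ord0 ord0.
set r := ((v k)^T *m g1) ord0 ord0 - _.
set z : 'cV[R]_V := W *m phi.
have np0 : 0 <= vnorm phi := vnorm_ge0 phi.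
have nphi : Num.sqrt mu = vnorm phi by rewrite -hphi sqrtr_sqr ger0_norm.
have phi0 : 0 < vnorm phi by rewrite -nphi sqrtr_gt0.
have hg : g = softmax z - delta_mx c ord0 by [].
have gradE X : gradF phi (delta_mx c ord0) X = gvec phi (delta_mx c ord0) X *m phi^T.
  by rewrite /gradF grad_onehot.
have pTp : phi^T *m phi = mu%:M by rewrite phiTphi hphi.
have rhotE : rhot = if g == 0 then 0 else rho * Num.sqrt mu / vnorm g by [].
set dl1 : 'cV[R]_V := rhot *: g.
set gq : 'cV[R]_V := softmax (z + dl1) - delta_mx c ord0.
set dl2 : 'cV[R]_V := - (eta * mu) *: gq.
have hs : sam_step phi (delta_mx c ord0) eta rho W *m phi = z + dl2.
  rewrite /sam_step /= mulmxBl -scalemxAl gradE -mulmxA pTp mul_mx_scalar /gvec.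
  have -> : (W + (if gvec phi (delta_mx c ord0) W == 0 then 0
       else rho / frob (gradF phi (delta_mx c ord0) W) *: gradF phi (delta_mx c ord0) W)) *m phi
       = z + dl1.
    rewrite -/g /dl1 rhotE; case: ifP => g0.
      by rewrite addr0 scale0r addr0.
    have ng0 : 0 < vnorm g by apply: vnorm_gt0; rewrite g0.
    rewrite mulmxDl gradE -/g frob_outer -scalemxAl -mulmxA pTp mul_mx_scalar scalerA nphi.
    congr (_ + _ *: _); rewrite -hphi; field.
    by rewrite !gt_eqF.
  by rewrite /dl2 /gq scalerA scaleNr.
have g1E : g1 = softmax (z + dl2) - delta_mx c ord0 by rewrite /g1 /gvec hs.
set Rm1 : 'cV[R]_V := softmax (z + dl1) - softmax z - Hz z *m dl1.
set Rm2 : 'cV[R]_V := softmax (z + dl2) - softmax z - Hz z *m dl2.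
have gtE : gq = g + Hz z *m dl1 + Rm1 by rewrite /gq /Rm1 hg; exact: decomp.
have g1E' : g1 = g + Hz z *m dl2 + Rm2 by rewrite g1E /Rm2 hg; exact: decomp.
have dl1E : dl1 = rhot *: g by rewrite /dl1.
have dl2E : dl2 = - (eta * mu) *: gq by rewrite /dl2.
have Rm1E : Rm1 = softmax (z + dl1) - softmax z - Hz z *m dl1 by rewrite /Rm1.
have Rm2E : Rm2 = softmax (z + dl2) - softmax z - Hz z *m dl2 by rewrite /Rm2.
have gqb i : `|gq i ord0| <= 1 by exact: g_bound.
clearbody Rm2 Rm1 dl2 gq dl1 g1 rhot g.
have vH : (v k)^T *m Hz z = lam k *: (v k)^T.
  rewrite /z hH mulmx_sumr (bigD1 k) //= big1 ?addr0.
    by rewrite -scalemxAr mulmxA vo eqxx mul_scalar_mx scale1r.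
  move=> l /negPf kl; rewrite -scalemxAr mulmxA vo eq_sym kl mul_scalar_mx scale0r.
  by rewrite scaler0.
have vmul x : (v k)^T *m (Hz z *m x) = lam k *: ((v k)^T *m x).
  by rewrite mulmxA vH -scalemxAl.
set a1 := ((v k)^T *m Rm1) ord0 ord0.
set a2 := ((v k)^T *m Rm2) ord0 ord0.
have a1E : a1 = ((v k)^T *m Rm1) ord0 ord0 by [].
have a2E : a2 = ((v k)^T *m Rm2) ord0 ord0 by [].
clearbody a1 a2.
have Egt : ((v k)^T *m gq) ord0 ord0 = e + lam k * (rhot * e) + a1.
  by rewrite gtE !mulmxDr vmul dl1E -scalemxAr !entD !entZ -/e -a1E.
have Eg1 : ((v k)^T *m g1) ord0 ord0 =
    e + lam k * (- (eta * mu) * ((v k)^T *m gq) ord0 ord0) + a2.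
  by rewrite g1E' !mulmxDr vmul dl2E -scalemxAr !entD !entZ -/e -a2E.
have rE : r = - (eta * mu * lam k) * a1 + a2.
  rewrite /r Eg1 Egt; ring.
have vb i : `|v k i ord0| <= 1 by apply: unit_entry; rewrite vo eqxx.
have lamE : lam k = ((v k)^T *m (Hz z *m v k)) ord0 ord0.
  by rewrite vmul vo eqxx entZ !mxE eqxx mulr1n mulr1.
have lamb : `|lam k| <= n * 2.
  rewrite lamE; apply: dot_bound => // i; rewrite -[2]mulr1; apply: Hz_bound => j; exact: vb.
set D1 := `|rho| * vnorm phi.
have sq1 : Num.sqrt `|eta| <= 1 by rewrite -sqrtr1 ler_wsqrtr.
have rk : `|rho| <= kappa.
  by have := ler_wpM2l ka0 sq1; rewrite mulr1 => h; exact: le_trans hrho h.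
have D10 : 0 <= D1 by rewrite mulr_ge0 ?normr_ge0.
have D1B : D1 <= B.
  have h := ler_wpM2r np0 rk; rewrite /D1 /B nphi.
  have : 0 <= kappa * vnorm phi by rewrite mulr_ge0.
  lra.
have D1sq : D1 ^+ 2 <= kappa ^+ 2 * `|eta| * mu.
  rewrite /D1 exprMn hphi; apply: ler_wpM2r => //.
  rewrite -(sqr_sqrtr (normr_ge0 eta)) -exprMn; apply: lerXn2r => //; rewrite ?nnegrE ?normr_ge0 //.
  by rewrite mulr_ge0 ?sqrtr_ge0.
have dl1b j : `|dl1 j ord0| <= D1.
  rewrite dl1E entZ rhotE; case: ifP => g0; first by rewrite mul0r normr0.
  have ng0 : 0 < vnorm g by apply: vnorm_gt0; rewrite g0.
  rewrite nphi !normrM normfV (gtr0_norm ng0) (ger0_norm np0).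
  have h : `|g j ord0| / vnorm g <= 1 by rewrite ler_pdivrMr // mul1r vnorm_entry.
  rewrite -mulrA -[X in _ <= X]mulr1 [_^-1 * _]mulrC; apply: ler_wpM2l => //.
set D2 := `|eta| * mu.
have D20 : 0 <= D2 by rewrite mulr_ge0 ?normr_ge0.
have D2B : D2 <= B.
  have := ler_wpM2r mu0' e1; rewrite mul1r /D2 /B => h.
  have : 0 <= kappa * Num.sqrt mu by rewrite mulr_ge0 ?sqrtr_ge0.
  lra.
have dl2b j : `|dl2 j ord0| <= D2.
  rewrite dl2E entZ normrM normrN normrM (gtr0_norm mu0).
  rewrite -[X in _ <= X]mulr1; apply: ler_wpM2l => //; exact: gqb.
have R1b i : `|Rm1 i ord0| <= K * D1 ^+ 2.
  by rewrite Rm1E !entB -KBK; exact: rem_bound.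
have R2b i : `|Rm2 i ord0| <= K * D2 ^+ 2.
  by rewrite Rm2E !entB -KBK; exact: rem_bound.
have a1b : `|a1| <= n * (K * D1 ^+ 2) by rewrite a1E; apply: dot_bound.
have a2b : `|a2| <= n * (K * D2 ^+ 2) by rewrite a2E; apply: dot_bound.
have ee : `|eta| * `|eta| = eta ^+ 2 by rewrite -expr2 real_normK ?num_real.
rewrite rE; apply: le_trans (ler_normD _ _) _.
rewrite normrM normrN !normrM (gtr0_norm mu0).
have t1 : `|eta| * mu * `|lam k| * `|a1| <= eta ^+ 2 * C1.
  have h1 : `|a1| <= n * (K * (kappa ^+ 2 * `|eta| * mu)).
    exact: le_trans a1b (ler_wpM2l n0 (ler_wpM2l K0 D1sq)).
  have h2 : `|lam k| * `|a1| <= (n * 2) * (n * (K * (kappa ^+ 2 * `|eta| * mu))).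
    exact: ler_pM (normr_ge0 _) (normr_ge0 _) lamb h1.
  have h3 := ler_wpM2l (mulr_ge0 (normr_ge0 eta) mu0') h2.
  rewrite -mulrA; apply: le_trans h3 _.
  rewrite le_eqVlt; apply/orP; left; apply/eqP; rewrite -ee /C1; ring.
have t2 : `|a2| <= eta ^+ 2 * C2.
  apply: le_trans a2b _.
  rewrite le_eqVlt; apply/orP; left; apply/eqP; rewrite /D2 -ee /C2; ring.
apply: le_trans (lerD t1 t2) _.
have -> : (C1 + C2 + 1) * eta ^+ 2 = eta ^+ 2 * C1 + eta ^+ 2 * C2 + eta ^+ 2 by ring.
by rewrite lerDl sqr_ge0.
Qed.
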